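(* Let $s,t$ be positive integers, $k,l$ nonnegative integers and $r$ a positive integer. Put $$a=\frac{l(s+t)+t}{s+t},\qquad b=\frac{k(s+t)+s}{s+t},$$ and define $$P(x)=\left(\frac{x-1}{2}\right)^{l(s+t)+t}\left(\frac{x+1}{2}\right)^{k(s+t)+s}J_{r-1}(a,b,x)^{s+t},\qquad Q(x)=J_{k+l+r}(-a,-b,x)^{s+t}.$$ Then $\deg(P-Q)\le m$, where $m=(k+l+r)(s+t-1)-r$.
   Context: For a nonnegative integer $N$ and complex parameters $\alpha,\beta$, the (generalized) Jacobi polynomial is $J_N(\alpha,\beta,x)=\sum_{j=0}^{N}\binom{N+\alpha+\beta+j}{j}\binom{N+\alpha}{N-j}\left(\frac{x-1}{2}\right)^j$, where $\binom{y}{j}=y(y-1)\cdots(y-j+1)/j!$ for arbitrary $y$. Here $a+b=k+l+1$. The polynomials $P,Q$ have degree $(s+t)(k+l+r)$, and $m$ is this degree minus $k+l+2r$; this is the Davenport–Zannier pair for the ''even double brush'' weighted tree (a chain with alternating edge weights $s,t$ and $r$ inner white vertices, with $k$ and $l$ leaves of weight $s+t$ attached at its two ends). *)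

(* Defs.v *)
From HB Require Import structures.
From mathcomp Require Import all_boot all_order all_algebra.
Set Implicit Arguments. Unset Strict Implicit. Unset Printing Implicit Defensive.
Import Order.TTheory GRing.Theory Num.Theory.
Local Open Scope ring_scope.

Definition gbinom (R : fieldType) (y : R) (j : nat) : R :=
  (\prod_(i < j) (y - i%:R)) / (j`!)%:R.

Definition xm1half (R : fieldType) : {poly R} := 2%:R^-1 *: ('X - 1).
Definition xp1half (R : fieldType) : {poly R} := 2%:R^-1 *: ('X + 1).

Definition jacobi (R : fieldType) (N : nat) (al be : R) : {poly R} :=
  \sum_(j < N.+1)
     (gbinom (N%:R + al + be + j%:R) j * gbinom (N%:R + al) (N - j)%N)
       *: xm1half R ^+ j.

(* Main.v *)
Require Import Defs.
From HB Require Import structures.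
From mathcomp Require Import all_boot all_order all_algebra.
From mathcomp Require Import ring lra zify.
Set Implicit Arguments. Unset Strict Implicit. Unset Printing Implicit Defensive.
Import Order.TTheory GRing.Theory Num.Theory.
Local Open Scope ring_scope.

Section S.
Variable R : numFieldType.

Lemma natr_neq0 (n : nat) : (0 < n)%N -> (n%:R : R) != 0.
Proof. by move=> h; rewrite pnatr_eq0 -lt0n. Qed.

Lemma gbinomS (y : R) j : (j.+1)%:R * gbinom (y + 1) j.+1 = (y + 1) * gbinom y j.
Proof.
rewrite /gbinom big_ord_recl /= factS natrM.
have -> : \prod_(i < j) (y + 1 - (bump 0 i)%:R) = \prod_(i < j) (y - i%:R).
  by apply: eq_bigr => i _; rewrite /bump /=; ring.
have h1 := natr_neq0 (ltn0Sn j).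
have h2 : (j`!%:R : R) != 0 by apply: natr_neq0; exact: fact_gt0.
have h3 : 1 + j%:R != 0 :> R by rewrite addrC natr1.
rewrite subr0; field; by rewrite h2 h3.
Qed.

Lemma gbinomS2 (z : R) m : (m.+1)%:R * gbinom z m.+1 = (z - m%:R) * gbinom z m.
Proof.
rewrite /gbinom big_ord_recr /= factS natrM.
have h1 := natr_neq0 (ltn0Sn m).
have h2 : (m`!%:R : R) != 0 by apply: natr_neq0; exact: fact_gt0.
have h3 : 1 + m%:R != 0 :> R by rewrite addrC natr1.
field; by rewrite h2 h3.
Qed.


Definition cj (N : nat) (al be : R) (j : nat) : R :=
  if (j <= N)%N then gbinom (N%:R + al + be + j%:R) j * gbinom (N%:R + al) (N - j)
  else 0.

Definition jp (N : nat) (al be : R) : {poly R} := \poly_(j < N.+1) cj N al be j.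

Lemma coef_jp N al be j : (jp N al be)`_j = cj N al be j.
Proof. by rewrite /jp coef_poly ltnS; case: leqP => // h; rewrite /cj leqNgt h. Qed.

Lemma cj_rec N al be i :
  (i.+1)%:R * ((i.+1)%:R + al) * cj N al be i.+1
  = (N%:R - i%:R) * (N%:R + al + be + (i.+1)%:R) * cj N al be i.
Proof.
rewrite /cj; case: (ltngtP i N) => hiN.
-   set y := N%:R + al + be + i%:R.
  have ey : N%:R + al + be + (i.+1)%:R = y + 1 by rewrite /y -natr1; ring.
  have H1 := gbinomS y i. rewrite -ey in H1.
  have em : (N - i = (N - i.+1).+1)%N by lia.
  rewrite em.
  have H2 := gbinomS2 (N%:R + al) (N - i.+1).
  have ez : N%:R + al - (N - i.+1)%:R = (i.+1)%:R + al by rewrite natrB //; ring.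
  rewrite ez in H2.
  have eN : N%:R - i%:R = (N - i.+1).+1%:R :> R by rewrite -em natrB // ltnW.
  rewrite eN.
  transitivity (((i.+1)%:R + al) * gbinom (N%:R + al) (N - i.+1) *
                ((i.+1)%:R * gbinom (N%:R + al + be + (i.+1)%:R) i.+1)); first ring.
  rewrite H1 -H2; ring.
- by rewrite !mulr0.
- by rewrite hiN subrr !mul0r mulr0.
Qed.


Lemma coefXd (q : {poly R}) i : ('X * q^`())`_i = i%:R * q`_i.
Proof. by rewrite coefXM; case: i => [|i] //=; rewrite ?mul0r // coef_deriv mulr_natl. Qed.

Lemma jp_ode N al be :
  let p := jp N al be in
  'X * ('X + 1) * p^`()^`() + ((al + 1)%:P + (al + be + 2%:R)%:P * 'X) * p^`()
  = (N%:R * (N%:R + al + be + 1))%:P * p.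
Proof.
move=> p.
have E : 'X * ('X + 1) * p^`()^`() =
   'X * ('X * p^`())^`() - 'X * p^`() + ('X * p^`())^`() - p^`().
  rewrite derivM derivX; move: (p^`()) (p^`()^`()) => u v; ring.
rewrite E mulrDl -mulrA.
apply/polyP => i.
rewrite !(coefD, coefB, coefN, coefCM, coefXd, coef_deriv) !coef_jp.
have := cj_rec N al be i.
move: (cj N al be i.+1) (cj N al be i) => c1 c0 H.
transitivity ((i.+1)%:R * ((i.+1)%:R + al) * c1
   + (i%:R * i%:R - i%:R + (al + be + 2) * i%:R) * c0); first ring.
rewrite H; ring.
Qed.


Lemma W_deriv0 (A B mu la : R) (h g : {poly R}) :
  'X * ('X + 1) * h^`()^`() + ((A + 1)%:P + (A + B + 2%:R)%:P * 'X) * h^`() = mu%:P * h ->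
  'X * ('X + 1) * g^`()^`() + ((- A + 1)%:P + (- A + - B + 2%:R)%:P * 'X) * g^`() = la%:P * g ->
  A + B + mu - la = 0 ->
  ((A%:P * ('X + 1) + B%:P * 'X) * h * g + 'X * ('X + 1) * (h^`() * g - h * g^`()))^`() = 0.
Proof.
move=> Eh Eg Hc.
have -> : ((A%:P * ('X + 1) + B%:P * 'X) * h * g + 'X * ('X + 1) * (h^`() * g - h * g^`()))^`()
  = g * ('X * ('X + 1) * h^`()^`() + ((A + 1)%:P + (A + B + 2%:R)%:P * 'X) * h^`() - mu%:P * h)
  - h * ('X * ('X + 1) * g^`()^`() + ((- A + 1)%:P + (- A + - B + 2%:R)%:P * 'X) * g^`() - la%:P * g)
  + (A + B + mu - la)%:P * h * g.
  rewrite !derivE !(rmorphD, rmorphN, rmorphB) /= ?polyC1 ?polyC_natr.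
  move: (h^`()) (h^`()^`()) (g^`()) (g^`()^`()) => h1 h2 g1 g2.
  ring.
by rewrite Eh Eg Hc !subrr !mulr0 subrr mul0r mul0r addr0.
Qed.


Lemma size_gt_coef (p : {poly R}) i : p`_i != 0 -> (i < size p)%N.
Proof. rewrite ltnNge; apply: contra => /leq_sizeP H; by rewrite H. Qed.

Lemma deriv0_size (W : {poly R}) : W^`() = 0 -> (size W <= 1)%N.
Proof.
move=> HW; apply/leq_sizeP => [[|j]] // _.
have := congr1 (fun q : {poly R} => q`_j) HW.
rewrite coef_deriv coef0 => /eqP; rewrite mulrn_eq0 /= => /eqP //.
Qed.

Lemma coef_mul_top (p q : {poly R}) a b :
  (size p <= a.+1)%N -> (size q <= b.+1)%N -> (p * q)`_(a + b) = p`_a * q`_b.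
Proof.
move=> Hp0 Hq0.
have Hp : forall j, (a.+1 <= j)%N -> p`_j = 0 by apply/leq_sizeP.
have Hq : forall j, (b.+1 <= j)%N -> q`_j = 0 by apply/leq_sizeP.
have ha : (a < (a + b).+1)%N by lia.
rewrite coefM (bigD1 (Ordinal ha)) //= big1 ?addr0; first by congr (_ * _); congr (_`_ _); lia.
move=> [j hj] /= hne.
have hne' : j != a by apply: contra hne => /eqP hja; apply/eqP/val_inj.
case: (ltngtP j a) => hja.
- by rewrite Hq ?mulr0 //; lia.
- by rewrite Hp ?mul0r //; lia.
- by move: hne'; rewrite hja eqxx.
Qed.

Lemma size_mul_le (p q : {poly R}) a b :
  (size p <= a.+1)%N -> (size q <= b.+1)%N -> (size (p * q)%R <= (a + b).+1)%N.
Proof. move=> hp hq; apply: leq_trans (size_polyMleq p q) _; lia. Qed.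

Lemma size_exp_le (p : {poly R}) a e :
  (size p <= a.+1)%N -> (size (p ^+ e) <= (a * e).+1)%N.
Proof. move=> hp; apply: leq_trans (size_poly_exp_leq p e) _; rewrite ltnS leq_mul2r; apply/orP; right; lia. Qed.

Lemma coef_exp_top (p : {poly R}) a e :
  (size p <= a.+1)%N -> (p ^+ e)`_(a * e) = p`_a ^+ e.
Proof.
move=> hp; elim: e => [|e IH]; first by rewrite muln0 !expr0 coef1.
rewrite !exprS mulnS coef_mul_top // ?IH //; exact: size_exp_le.
Qed.

Lemma sizeXp1 : (size ('X + 1 : {poly R})%R <= 1.+1)%N.
Proof. by rewrite -polyC1 size_XaddC. Qed.

Lemma coefXp1 : ('X + 1 : {poly R})`_1 = 1.
Proof. by rewrite coefD coefX coef1 /= addr0. Qed.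

Lemma core (n N r' e1 e2 D : nat) (h g W : {poly R}) :
  (0 < n)%N ->
  (size h <= r'.+1)%N -> (size g <= N.+1)%N -> h`_r' = g`_N -> h`_r' != 0 ->
  (e1.+1 + e2.+1 + r' * n = n * N)%N ->
  (size W <= 1)%N ->
  let Pu := 'X^(e1.+1) * ('X + 1) ^+ (e2.+1) * h ^+ n in
  let Qu := g ^+ n in
  Pu^`() * Qu - Pu * Qu^`() =
    n%:R%:P * ('X^e1 * ('X + 1) ^+ e2 * h ^+ (n.-1) * g ^+ (n.-1) * W) ->
  ((e1 + e2 + r' * n.-1 + N * n.-1).+1 <= n * N + D)%N ->
  (size (Pu - Qu)%R <= D.+1)%N.
Proof.
move=> n0 sh sg hg h0 hdeg sW Pu Qu Hid HD.
set K := (n * N)%N.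
have sPu : (size Pu <= K.+1)%N.
  have -> : K = (e1.+1 + 1 * e2.+1 + r' * n)%N by rewrite /K; lia.
  apply: size_mul_le; last exact: size_exp_le.
  apply: size_mul_le; last exact: size_exp_le sizeXp1.
  by rewrite size_polyXn.
have cPu : Pu`_K = h`_r' ^+ n.
  have -> : K = (e1.+1 + 1 * e2.+1 + r' * n)%N by rewrite /K; lia.
  rewrite /Pu coef_mul_top; last exact: size_exp_le.
    rewrite coef_exp_top // coef_mul_top; last exact: size_exp_le sizeXp1.
      by rewrite coef_exp_top ?sizeXp1 // coefXp1 coefXn eqxx expr1n !mul1r.
    by rewrite size_polyXn.
  apply: size_mul_le; last exact: size_exp_le sizeXp1.
  by rewrite size_polyXn.
have sQu : (size Qu <= K.+1)%N by rewrite /K mulnC; exact: size_exp_le.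
have cQu : Qu`_K = g`_N ^+ n by rewrite /K mulnC coef_exp_top.
have PK0 : Pu`_K != 0 by rewrite cPu expf_neq0.
have Pu0 : Pu != 0 by apply: contraNneq PK0 => ->; rewrite coef0.
set R0 := Pu - Qu.
have sR0 : (size R0 <= K)%N.
  apply/leq_sizeP => j hj.
  have sP' : forall j, (K.+1 <= j)%N -> Pu`_j = 0 by apply/leq_sizeP.
  have sQ' : forall j, (K.+1 <= j)%N -> Qu`_j = 0 by apply/leq_sizeP.
  rewrite /R0 coefB; case: (ltngtP K j) => hK.
  - by rewrite sP' // sQ' // subrr.
  - lia.
  - by rewrite -hK cPu cQu hg subrr.
rewrite leqNgt; apply/negP => hlt.
have [d' hd] : exists d', size R0 = d'.+2 by exists (size R0).-2; lia.
have hdD : (D <= d')%N by lia.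
have [K' hK] : exists K', K = K'.+1 by exists K.-1; lia.
have R00 : R0 != 0 by rewrite -size_poly_gt0 hd.
have lR : R0`_d'.+1 != 0.
  by move: R00; rewrite -lead_coef_eq0 lead_coefE hd.
have Tid : Pu * R0^`() - Pu^`() * R0 =
    n%:R%:P * ('X^e1 * ('X + 1) ^+ e2 * h ^+ (n.-1) * g ^+ (n.-1) * W).
  rewrite -Hid /R0 derivB.
  move: (Pu^`()) (Qu^`()) => P1 Q1; ring.
have sR0' : (size R0^`() <= d'.+1)%N.
  by have := lt_size_deriv R00; rewrite hd ltnS.
have sPu' : (size Pu^`() <= K'.+1)%N.
  by have := lt_size_deriv Pu0; move: sPu; rewrite hK; lia.
have cT : (Pu * R0^`() - Pu^`() * R0)`_(K + d') =
    Pu`_K * R0`_d'.+1 * (d'.+1%:R - K%:R).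
  rewrite coefB coef_mul_top //. 
  have -> : (K + d' = K' + d'.+1)%N by lia.
  rewrite coef_mul_top //; last by rewrite hd.
  rewrite !coef_deriv -hK.
  rewrite -[Pu`_K *+ K]mulr_natr -[R0`_d'.+1 *+ d'.+1]mulr_natr; ring.
have cT0 : (Pu * R0^`() - Pu^`() * R0)`_(K + d') != 0.
  rewrite cT !mulf_neq0 //; rewrite subr_eq0 eqr_nat; apply/negP => /eqP; lia.
have := size_gt_coef cT0.
rewrite Tid.
have sRHS : (size (n%:R%:P * ('X^e1 * ('X + 1) ^+ e2 * h ^+ (n.-1) * g ^+ (n.-1) * W))%R
    <= (0 + (e1 + 1 * e2 + r' * n.-1 + N * n.-1 + 0)).+1)%N.
  apply: size_mul_le; first exact: size_polyC_leq1.
  apply: size_mul_le => //.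
  apply: size_mul_le; last exact: size_exp_le.
  apply: size_mul_le; last exact: size_exp_le.
  apply: size_mul_le; last exact: size_exp_le sizeXp1.
  by rewrite size_polyXn.
move: sRHS; lia.
Qed.

Definition Wr (A B : R) (h g : {poly R}) : {poly R} :=
  (A%:P * ('X + 1) + B%:P * 'X) * h * g + 'X * ('X + 1) * (h^`() * g - h * g^`()).

Lemma wronsk_id (n' e1 e2 : nat) (A B : R) (h g : {poly R}) :
  (n'.+1)%:R * A = (e1.+1)%:R -> (n'.+1)%:R * B = (e2.+1)%:R ->
  let Pu := 'X^(e1.+1) * ('X + 1) ^+ (e2.+1) * h ^+ (n'.+1) in
  let Qu := g ^+ (n'.+1) in
  Pu^`() * Qu - Pu * Qu^`() =
    (n'.+1)%:R%:P * ('X^e1 * ('X + 1) ^+ e2 * h ^+ n' * g ^+ n' * Wr A B h g).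
Proof.
move=> hA hB Pu Qu.
have E : (n'.+1)%:R%:P * Wr A B h g =
   ((n'.+1)%:R * A)%:P * ('X + 1) * h * g + ((n'.+1)%:R * B)%:P * 'X * h * g
   + (n'.+1)%:R%:P * ('X * ('X + 1) * (h^`() * g - h * g^`())).
  by rewrite !polyCM /Wr; ring.
transitivity ('X^e1 * ('X + 1) ^+ e2 * h ^+ n' * g ^+ n' * ((n'.+1)%:R%:P * Wr A B h g));
  last ring.
rewrite E hA hB !polyC_natr /Pu /Qu.
have d1 : ('X + 1 : {poly R})^`() = 1 by rewrite derivD derivX -polyC1 derivC addr0.
rewrite !derivM !deriv_exp /= d1 derivX.
rewrite !exprS.
move: (h^`()) (g^`()) => h1 g1.
ring.
Qed.

Lemma gbinom0 (z : R) : gbinom z 0 = 1.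
Proof. by rewrite /gbinom big_ord0 fact0 divr1. Qed.

Lemma gbinom_nat x j : (j <= x)%N -> gbinom (x%:R : R) j = 'C(x, j)%:R.
Proof.
elim: j => [|j IH] hj; first by rewrite gbinom0 bin0.
apply: (mulfI (natr_neq0 (ltn0Sn j))).
rewrite gbinomS2 IH ?(ltnW hj) // -natrM mul_bin_left natrM natrB ?(ltnW hj) //.
Qed.

Lemma jp_top N al be : (jp N al be)`_N = gbinom (N%:R + al + be + N%:R) N.
Proof. by rewrite coef_jp /cj leqnn subnn gbinom0 mulr1. Qed.

Lemma size_jp N al be : (size (jp N al be) <= N.+1)%N.
Proof. exact: size_poly. Qed.

Lemma jacobi_comp N al be : jacobi N al be = jp N al be \Po xm1half R.
Proof.
rewrite /jacobi /jp poly_def raddf_sum; apply: eq_bigr => j _.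
by rewrite /= comp_polyZ comp_Xn_poly /cj -ltnS ltn_ord.
Qed.

Lemma two_neq0 : (2%:R : R) != 0.
Proof. exact: natr_neq0. Qed.

Lemma xp1_comp : xp1half R = ('X + 1) \Po xm1half R.
Proof.
rewrite comp_polyD comp_polyX -polyC1 comp_polyC polyC1 /xm1half /xp1half.
rewrite -!mul_polyC.
have H : (2%:R^-1)%:P * 2%:R = 1 :> {poly R}.
  by rewrite -polyC_natr -polyCM mulVf ?two_neq0 // polyC1.
move: ((2%:R^-1)%:P) H => c H.
symmetry; transitivity (c * ('X - 1) + c * 2%:R); first by rewrite H.
ring.
Qed.

Lemma size_xm1 : size (xm1half R) = 2.
Proof.
rewrite /xm1half size_scale ?invr_eq0 ?two_neq0 //.
by rewrite -polyC1 size_XsubC.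
Qed.

End S.

Theorem mainTheorem4 (R : numFieldType) (s t k l r : nat) :
  (0 < s)%N -> (0 < t)%N -> (0 < r)%N ->
  let a : R := (l * (s + t) + t)%:R / (s + t)%:R in
  let b : R := (k * (s + t) + s)%:R / (s + t)%:R in
  let P : {poly R} :=
    xm1half R ^+ (l * (s + t) + t) * xp1half R ^+ (k * (s + t) + s)
      * jacobi (r.-1) a b ^+ (s + t) in
  let Q : {poly R} := jacobi (k + l + r) (- a) (- b) ^+ (s + t) in
  let m : nat := ((k + l + r) * (s + t - 1) - r)%N in
  (size (P - Q)%R <= m.+1)%N.
Proof.
move=> hs ht hr; cbv zeta.
set a : R := (l * (s + t) + t)%:R / (s + t)%:R.
set b : R := (k * (s + t) + s)%:R / (s + t)%:R.
set m := ((k + l + r) * (s + t - 1) - r)%N.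
have n0 : ((s + t)%:R : R) != 0 by apply: natr_neq0; lia.
have hab : a + b = (k + l + 1)%:R.
  rewrite /a /b -mulrDl -natrD.
  rewrite (_ : (l * (s + t) + t + (k * (s + t) + s) = (k + l + 1) * (s + t))%N); last by nia.
  by rewrite natrM mulfK.
set h := jp (r.-1) a b.
set g := jp (k + l + r) (- a) (- b).
have -> : xm1half R ^+ (l * (s + t) + t) * xp1half R ^+ (k * (s + t) + s)
      * jacobi (r.-1) a b ^+ (s + t) - jacobi (k + l + r) (- a) (- b) ^+ (s + t) = ('X^(l * (s + t) + t) * ('X + 1) ^+ (k * (s + t) + s) * h ^+ (s + t)
                   - g ^+ (s + t)) \Po xm1half R.
  by rewrite !jacobi_comp xp1_comp rmorphB /= !rmorphM /= !rmorphXn /= comp_polyX.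
rewrite size_comp_poly2 ?size_xm1 //.
have [n' hn] : exists n', (s + t = n'.+1)%N by exists (s + t).-1; lia.
have [e1 he1] : exists e1, (l * (s + t) + t = e1.+1)%N by exists (l * (s + t) + t).-1; lia.
have [e2 he2] : exists e2, (k * (s + t) + s = e2.+1)%N by exists (k * (s + t) + s).-1; lia.
have [r' hr'] : exists r', r = r'.+1 by exists r.-1; lia.
set N := (k + l + r)%N.
have lh : h`_r.-1 = 'C(N + r.-1, r.-1)%:R.
  rewrite /h jp_top -(addrA _ a b) hab -!natrD.
  rewrite (_ : (r.-1 + (k + l + 1) + r.-1 = N + r.-1)%N); last by rewrite /N; lia.
  by rewrite gbinom_nat // leq_addl.
have lg : g`_N = 'C(N + r.-1, r.-1)%:R.
  rewrite /g jp_top -(addrA _ (- a)) -opprD hab.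
  have -> : (N%:R - (k + l + 1)%:R + N%:R : R) = (N + r.-1)%:R.
    rewrite (_ : (N + r.-1 = (N + N) - (k + l + 1))%N); last by rewrite /N; lia.
    rewrite natrB ?natrD; last by rewrite /N; lia.
    ring.
  rewrite gbinom_nat ?leq_addr //.
  by rewrite -[in RHS]bin_sub ?leq_addl // addnK.
have lh0 : h`_r.-1 != 0 by rewrite lh natr_neq0 // bin_gt0 leq_addl.
have hA : (n'.+1)%:R * a = (e1.+1)%:R by rewrite -hn -he1 /a mulrC divfK.
have hB : (n'.+1)%:R * b = (e2.+1)%:R by rewrite -hn -he2 /b mulrC divfK.
have Hc : a + b + (r.-1)%:R * ((r.-1)%:R + a + b + 1) - N%:R * (N%:R + - a + - b + 1) = 0.
  have hb : b = (k + l + 1)%:R - a by rewrite -hab; ring.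
  rewrite hb /N hr' /=; ring.
have sW : (size (Wr a b h g) <= 1)%N.
  apply: deriv0_size; apply: W_deriv0 Hc.
  - exact: jp_ode.
  - exact: jp_ode.
have hid := @wronsk_id R n' e1 e2 a b h g hA hB.
rewrite he1 he2 hn.
have := core (n := n'.+1) (N := N) (r' := r.-1) (e1 := e1) (e2 := e2) (D := m)
  (h := h) (g := g) (W := Wr a b h g) (ltn0Sn n') (size_jp _ _ _) (size_jp _ _ _).
move=> /(_ (etrans lh (esym lg)) lh0) H.
apply: H => //.
  rewrite /N -he1 -he2 -hn; nia.
rewrite /m /N.
have hn1 : (s + t - 1 = n')%N by lia.
rewrite hn1 /=.
rewrite -/N.
have : (r <= N * n')%N by rewrite /N; nia.
move: he1 he2 hn; rewrite /N; nia.
Qed.
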